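(* Let $N=n$ be prime, $f=x_1^N+\dots+x_N^N$, $S\subseteq S_N$, $G=S\ltimes\mathrm{SL}_f$. Let $u=\sigma g\in G$ ($\sigma\in S$, $g\in\mathrm{SL}_f$) where $\sigma=\prod_{a=1}^m\sigma_a$ is the decomposition into disjoint cycles (cycles of length 1 included) with $m\ge 2$, and let $i_a$ be the first index of the support of $\sigma_a$. Then there exist integers $d_1,\dots,d_m$ such that $u$ is conjugate in $G$ to $\prod_{a=1}^m\sigma_at_{i_a}^{d_a}$.
   Context: $\zeta=\exp(2\pi\sqrt{-1}/N)$; $t_k$ is the diagonal map multiplying $x_k$ by $\zeta$ and fixing the other coordinates; $G_f^d=\langle t_1,\dots,t_N\rangle$, $\mathrm{SL}_f=\{g\in G_f^d:\det g=1\}$; $S_N$ acts on $\mathbb C^N$ by permuting coordinates and $S\ltimes\mathrm{SL}_f\subseteq GL_N(\mathbb C)$ is the generated group. *)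

(* Defs.v *)
From HB Require Import structures.
From mathcomp Require Import all_boot all_order all_algebra all_fingroup all_field.
Set Implicit Arguments. Unset Strict Implicit. Unset Printing Implicit Defensive.
Import Order.TTheory GRing.Theory Num.Theory.
Local Open Scope ring_scope.

(* Dimension N = n.+1 (so that 'M_N has its canonical ring structure). *)

(* zeta : a primitive N-th root of unity in algC (stands for exp(2 pi i/N);
   the groups below do not depend on which primitive root is chosen). *)
Definition zeta (n : nat) : algC := sval (C_prim_root_exists (ltn0Sn n)).

Definition tgen (n : nat) (k : 'I_n.+1) : 'M[algC]_n.+1 :=
  diag_mx (\row_(j < n.+1) (if j == k then zeta n else 1)).

Inductive gen (n : nat) (P : 'M[algC]_n.+1 -> Prop) : 'M[algC]_n.+1 -> Prop :=
| gen_base M : P M -> gen P M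
| gen_one : gen P 1
| gen_mul M M' : gen P M -> gen P M' -> gen P (M * M')
| gen_inv M : gen P M -> gen P (M^-1).

Definition Gfd (n : nat) : 'M[algC]_n.+1 -> Prop :=
  gen (fun M => exists k : 'I_n.+1, M = tgen k).

Definition SLf (n : nat) (M : 'M[algC]_n.+1) : Prop := Gfd M /\ \det M = 1.

(* S |x SL_f : the subgroup of GL_N(C) generated by the permutation
   matrices of S and by SL_f. *)
Definition Ggrp (n : nat) (S : {set 'S_n.+1}) : 'M[algC]_n.+1 -> Prop :=
  gen (fun M => (exists2 s, s \in S & M = perm_mx s) \/ SLf M).

Definition conj_in (n : nat) (H : 'M[algC]_n.+1 -> Prop) (u v : 'M[algC]_n.+1) :=
  exists h, H h /\ v = h * u * h^-1.

Definition cycle_of (n : nat) (s : 'S_n.+1) (A : {set 'I_n.+1}) : 'S_n.+1 :=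
  restr_perm A s.

Definition first_idx (n : nat) (A : {set 'I_n.+1}) : 'I_n.+1 :=
  [arg min_(i < ord0 in A) (i : nat)].

(* Main.v *)
Require Import Defs.
From HB Require Import structures.
From mathcomp Require Import all_boot all_order all_algebra all_fingroup all_field.
From mathcomp Require Import all_solvable zify.
Import Order.TTheory GRing.Theory Num.Theory.
Local Open Scope ring_scope.

Section Mon.
Variable n : nat.
Local Notation N := n.+1.

Definition Mon (s : 'S_N) (x : 'I_N -> algC) : 'M[algC]_N :=
  \matrix_(i, j) if s i == j then x j else 0.

Lemma Mon_ext s t x y : s = t -> x =1 y -> Mon s x = Mon t y.
Proof. by move=> -> e; apply/matrixP=> i j; rewrite !mxE e. Qed.

Lemma MonM s t x y :
  Mon s x * Mon t y = Mon (s * t)%g (fun k => x (t^-1 k)%g * y k).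
Proof.
apply/matrixP=> i k; rewrite -mulmxE !mxE (bigD1 (s i)) //= big1 ?addr0.
  rewrite !mxE eqxx permM; case: eqP => [<-|_]; last by rewrite mulr0.
  by rewrite permK.
by move=> j /negbTE sj; rewrite !mxE eq_sym sj mul0r.
Qed.

Lemma perm_mxMon s : perm_mx s = Mon s (fun _ => 1).
Proof.
apply/matrixP=> i j; rewrite /perm_mx !mxE.
by case: eqP.
Qed.

Lemma Mon1 : Mon 1%g (fun _ => 1) = 1.
Proof. by apply/matrixP=> i j; rewrite !mxE perm1; case: eqP. Qed.

End Mon.
Arguments Mon {n}.

Section Dm.
Variable n : nat.
Local Notation N := n.+1.
Local Notation z := (zeta n).

Definition Dm (e : 'I_N -> nat) : 'M[algC]_N := Mon 1%g (fun k => z ^+ e k).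

Lemma zprim : N.-primitive_root z.
Proof. by rewrite /zeta; case: C_prim_root_exists. Qed.

Lemma DmM a b : Dm a * Dm b = Dm (fun k => (a k + b k)%N).
Proof. by rewrite /Dm MonM mulg1; apply: Mon_ext => // k; rewrite invg1 perm1 exprD. Qed.

Lemma Dm0 : Dm (fun _ => 0%N) = 1.
Proof. by rewrite /Dm -(Mon1 n); apply: Mon_ext. Qed.

Lemma Dm_ext a b : a =1 b -> Dm a = Dm b.
Proof. by move=> e; apply: Mon_ext => // k; rewrite e. Qed.

Lemma Dm_modN a b : (forall k, a k = b k %[mod N]) -> Dm a = Dm b.
Proof.
move=> e; apply: Mon_ext => // k.
by rewrite (divn_eq (a k) N) (divn_eq (b k) N) e !exprD ![(_ %/ N * N)%N]mulnC !exprM (prim_expr_order zprim) !expr1n.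
Qed.

Lemma tgenE k : tgen k = Dm (fun j => (j == k) : nat).
Proof.
apply/matrixP=> i j; rewrite !mxE perm1.
by case: (i =P j) => [->|] /=; case: (j =P k) => //= _; rewrite ?mulr1n ?mulr0n ?expr0.
Qed.

Lemma DmV a : Dm a * Dm (fun k => (n * a k)%N) = 1.
Proof.
rewrite DmM -Dm0; apply: Dm_modN => k.
by rewrite -{1}[a k]mul1n -mulnDl add1n modnMr mod0n.
Qed.

Lemma DmVl a : Dm (fun k => (n * a k)%N) * Dm a = 1.
Proof.
rewrite DmM -Dm0; apply: Dm_modN => k.
by rewrite addnC -{1}[a k]mul1n -mulnDl add1n modnMr mod0n.
Qed.

Lemma Dm_unit a : Dm a \is a GRing.unit.
Proof. by have [] := mulmx1_unit (DmV a). Qed.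

Lemma Dm_inv a : (Dm a)^-1 = Dm (fun k => (n * a k)%N).
Proof.
by rewrite -[RHS]mul1r -(mulVr (Dm_unit a)) -mulrA DmV mulr1.
Qed.

Lemma Gfd_Dm_inv (M : 'M[algC]_N) : Gfd M -> exists a, M = Dm a.
Proof.
elim=> {M} [M [k ->]| | M M' _ [a ->] _ [b ->] | M _ [a ->]].
- by exists (fun j => (j == k) : nat); rewrite tgenE.
- by exists (fun _ => 0%N); rewrite Dm0.
- by exists (fun k => (a k + b k)%N); rewrite DmM.
- by exists (fun k => (n * a k)%N); rewrite Dm_inv.
Qed.

Lemma tgenX k m : tgen k ^+ m = Dm (fun j => ((j == k) * m)%N).
Proof.
elim: m => [|m IH]; first by rewrite expr0 -Dm0; apply: Dm_ext => j; rewrite muln0.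
by rewrite exprS IH tgenE DmM; apply: Dm_ext => j; rewrite mulnS.
Qed.

Lemma Gfd_X (M : 'M[algC]_N) m : Gfd M -> Gfd (M ^+ m).
Proof.
move=> HM; elim: m => [|m IH]; first by rewrite expr0; apply: gen_one.
by rewrite exprS; apply: gen_mul.
Qed.

Lemma Gfd_Dm e : Gfd (Dm e).
Proof.
suff H : forall l, (l <= N)%N -> Gfd (Dm (fun j => if (j < l)%N then e j else 0%N)).
  have -> : Dm e = Dm (fun j => if (j < N)%N then e j else 0%N).
    by apply: Dm_ext => j; rewrite ltn_ord.
  exact: H.
elim=> [_|l IH lN].
  have -> : Dm (fun j : 'I_N => if (j < 0)%N then e j else 0%N) = Dm (fun _ => 0%N).
    by apply: Dm_ext.
  by rewrite Dm0; apply: gen_one.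
have -> : Dm (fun j : 'I_N => if (j < l.+1)%N then e j else 0%N) =
   Dm (fun j : 'I_N => if (j < l)%N then e j else 0%N) * tgen (Ordinal lN) ^+ e (Ordinal lN).
  rewrite tgenX DmM; apply: Dm_ext => j.
  rewrite ltnS leq_eqVlt; case: (j =P Ordinal lN) => [->|/eqP].
    by rewrite /= eqxx ltnn mul1n.
  rewrite -val_eqE /= => /negbTE ->; rewrite mul0n addn0 //.
apply: gen_mul; first by apply: IH; apply: ltnW.
by apply: Gfd_X; apply: gen_base; exists (Ordinal lN).
Qed.

Lemma det_Dm e : \det (Dm e) = z ^+ (\sum_k e k).
Proof.
have -> : Dm e = diag_mx (\row_k z ^+ e k).
  by apply/matrixP=> i j; rewrite !mxE perm1; case: eqP => [->|]; rewrite ?mulr1n ?mulr0n.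
by rewrite det_diag -prodrXr; apply: eq_bigr => k _; rewrite mxE.
Qed.

End Dm.

Section Prod.
Variable n : nat.
Local Notation N := n.+1.
Local Notation z := (zeta n).
Variable sigma : 'S_N.

Lemma mem_porbit_eq i x : (i \in porbit sigma x) = (porbit sigma i == porbit sigma x).
Proof. by rewrite eq_porbit_mem. Qed.

Lemma porbitS k : porbit sigma (sigma k) = porbit sigma k.
Proof. by have := porbit_perm sigma 1 k; rewrite expg1. Qed.

Lemma argmin_in (I:finType) (i0 i1 : I) (P : pred I) (F : I -> nat) :
  P i1 -> P [arg min_(i < i0 | P i) F i].
Proof.
move=> Pi1; have := arg_minnP F Pi1; rewrite /arg_min /extremum /=.
case: (pickP [pred i | P i & [forall (j | P j), (F i <= F j)%N]]) => [y /andP[Py _] _ //|none].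
case=> j Pj Hj.
have := none j; rewrite /= Pj /=; move/negbT/negP; case.
by apply/forallP => k; apply/implyP => /Hj.
Qed.

Lemma first_in (A : {set 'I_N}) x : x \in A -> first_idx A \in A.
Proof. by move=> xA; apply: argmin_in xA. Qed.

Lemma first_porbit k : porbit sigma (first_idx (porbit sigma k)) = porbit sigma k.
Proof. by apply/eqP; rewrite -mem_porbit_eq; apply: (@first_in _ k (porbit_id sigma k)). Qed.

Lemma cycleE A i : A \in porbits sigma ->
  cycle_of sigma A i = if i \in A then sigma i else i.
Proof.
case/imsetP=> x _ ->; case: ifP => iA.
  rewrite /cycle_of restr_permE //; apply/astabsP => y.
  by rewrite /= /aperm !mem_porbit_eq porbitS.
by rewrite /cycle_of (out_perm (restr_perm_on _ _)) ?iA.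
Qed.

Variable dn : {set 'I_N} -> nat.

Definition FF (A : {set 'I_N}) : 'M[algC]_N :=
  perm_mx (cycle_of sigma A) * tgen (first_idx A) ^ (Posz (dn A)).

Lemma FF_Mon A : FF A = Mon (cycle_of sigma A)
   (fun k => if k == first_idx A then z ^+ dn A else 1).
Proof.
rewrite /FF perm_mxMon.
have -> : tgen (first_idx A) ^ Posz (dn A) = tgen (first_idx A) ^+ dn A by [].
rewrite tgenX /Dm MonM mulg1; apply: Mon_ext => // k.
by rewrite mul1r; case: (k == first_idx A); rewrite ?mul1n ?mul0n ?expr0.
Qed.

Lemma prod_list (s : seq {set 'I_N}) : uniq s -> {subset s <= porbits sigma} ->
  exists tau : 'S_N, (forall i, tau i = if porbit sigma i \in s then sigma i else i) /\
   \prod_(A <- s) FF A = Mon tau (fun k => if (porbit sigma k \in s) &&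
        (k == first_idx (porbit sigma k)) then z ^+ dn (porbit sigma k) else 1).
Proof.
elim: s => [_ _|A s IH /andP[As us] sub].
  exists 1%g; split=> [i|]; first by rewrite perm1.
  by rewrite big_nil -(Mon1 n); apply: Mon_ext.
have [tau [tauE Hp]] := IH us (fun B Bs => sub B (@mem_behead _ (A :: s) B Bs)).
have Ap : A \in porbits sigma by apply: sub; rewrite inE eqxx.
have [x _ Ax] := imsetP Ap.
have inA i : (i \in A) = (porbit sigma i == A) by rewrite Ax mem_porbit_eq.
have tauA i : i \in A -> tau i = i.
  by move=> iA; rewrite tauE; move: iA; rewrite inA => /eqP ->; rewrite (negbTE As).
exists (cycle_of sigma A * tau)%g; split=> [i|].
  rewrite permM cycleE // inE -inA; case: (boolP (i \in A)) => iA /=.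
    by rewrite tauA // inA porbitS -inA.
  by rewrite tauE.
rewrite big_cons Hp FF_Mon MonM; apply: Mon_ext => // k.
rewrite inE; case: (boolP (k \in A)) => kA.
  have tk : (tau^-1)%g k = k by rewrite -{1}(tauA k kA) permK.
  move: (kA); rewrite inA => /eqP pk.
  by rewrite tk pk eqxx (negbTE As) /= mulr1.
have -> : ((tau^-1)%g k == first_idx A) = false.
  apply/negbTE/eqP => e.
  have fA : first_idx A \in A by apply: (@first_in _ x); rewrite Ax porbit_id.
  have : k = first_idx A by rewrite -(tauA _ fA) -e permKV.
  by move=> ek; rewrite ek fA in kA.
by move: kA; rewrite inA eq_sym => /negbTE ->; rewrite mul1r.
Qed.

Lemma prod_all : \prod_(A in porbits sigma) FF A =
  Mon sigma (fun k => if k == first_idx (porbit sigma k) then z ^+ dn (porbit sigma k) else 1).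
Proof.
rewrite -big_filter.
set r := [seq _ <- _ | _].
have mr B : (B \in r) = (B \in porbits sigma) by rewrite mem_filter mem_index_enum andbT.
have ur : uniq r by rewrite filter_uniq // index_enum_uniq.
have sub : {subset r <= porbits sigma} by move=> B; rewrite mr.
have [tau [tauE ->]] := @prod_list r ur sub.
have pin k : porbit sigma k \in r by rewrite mr imset_f.
apply: Mon_ext => [|k]; last by rewrite pin.
by apply/permP => i; rewrite tauE pin.
Qed.

End Prod.
Set Implicit Arguments.

Section Main.
Variable n : nat.
Local Notation N := n.+1.
Local Notation z := (zeta n).
Variable sigma : 'S_N.
Variable a : 'I_N -> nat.

Definition ik k := first_idx (porbit sigma k).
Definition Lk k := #|porbit sigma k|.
Definition tr k := traject sigma (ik k) (Lk k).
Definition jk k := index k (tr k).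
Definition beta k := (\sum_(l < jk k) a (iter l.+1 sigma (ik k)))%N.
Definition dn (A : {set 'I_N}) := (\sum_(l < #|A|) a (iter l sigma (first_idx A)))%N.

Lemma ik_porbit k : porbit sigma (ik k) = porbit sigma k.
Proof. exact: first_porbit. Qed.

Lemma tr_uniq k : uniq (tr k).
Proof. by have := uniq_traject_porbit sigma (ik k); rewrite ik_porbit. Qed.

Lemma k_in_tr k : k \in tr k.
Proof.
by have := porbit_traject sigma (ik k) k; rewrite ik_porbit => <-; apply: porbit_id.
Qed.

Lemma jk_lt k : (jk k < Lk k)%N.
Proof. by have := k_in_tr k; rewrite -index_mem size_traject. Qed.

Lemma iter_jk k : iter (jk k) sigma (ik k) = k.
Proof. by rewrite -(nth_traject _ (jk_lt k)) nth_index // k_in_tr. Qed.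

Lemma ikS k : ik (sigma k) = ik k.
Proof. by rewrite /ik porbitS. Qed.
Lemma LkS k : Lk (sigma k) = Lk k.
Proof. by rewrite /Lk porbitS. Qed.
Lemma ik_ik k : ik (ik k) = ik k.
Proof. by rewrite /ik -/(ik k) ik_porbit. Qed.
Lemma Lk_ik k : Lk (ik k) = Lk k.
Proof. by rewrite /Lk ik_porbit. Qed.

Lemma Lk_gt0 k : (0 < Lk k)%N.
Proof. by rewrite lt0n card_porbit_neq0. Qed.

Lemma jk_ik k : jk (ik k) = 0%N.
Proof.
rewrite /jk /tr ik_ik Lk_ik; case: (Lk k) (Lk_gt0 k) => // m _.
by rewrite /= eqxx.
Qed.

Lemma jkS k : (jk k).+1 != Lk k -> jk (sigma k) = (jk k).+1.
Proof.
move=> ne.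
have lt : ((jk k).+1 < Lk k)%N by rewrite ltn_neqAle ne jk_lt.
have e : sigma k = iter (jk k).+1 sigma (ik k) by rewrite iterS iter_jk.
rewrite /jk /tr ikS LkS e -(nth_traject _ lt) index_uniq ?size_traject //.
exact: tr_uniq.
Qed.

Lemma sigma_last k : (jk k).+1 = Lk k -> sigma k = ik k.
Proof.
move=> e; have := iter_porbit sigma (ik k).
by rewrite ik_porbit -/(Lk k) -e iterS iter_jk.
Qed.

Lemma ik_neq k : (jk k).+1 != Lk k -> (sigma k == ik (sigma k)) = false.
Proof.
move=> ne; apply/negbTE/eqP => e.
have := jk_ik (sigma k); rewrite -e jkS //.
Qed.

Lemma ik_eq k : (jk k).+1 = Lk k -> (sigma k == ik (sigma k)).
Proof. by move=> e; rewrite ikS sigma_last. Qed.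

End Main.
Arguments ik {n}.
Arguments Lk {n}.
Arguments tr {n}.
Arguments jk {n}.
Arguments beta {n}.
Arguments dn {n}.
Set Implicit Arguments.

Section Key.
Variable n : nat.
Local Notation N := n.+1.
Local Notation z := (zeta n).
Variable sigma : 'S_N.
Variable a : 'I_N -> nat.
Variable x0 : 'I_N.
Variable c : nat.

Definition bb k := ((if k \in porbit sigma x0 then c else 0) + beta sigma a k)%N.

Lemma key k0 :
  z ^+ bb k0 * (1 * z ^+ a (sigma k0)) =
  (if sigma k0 == first_idx (porbit sigma (sigma k0))
   then z ^+ dn sigma a (porbit sigma (sigma k0)) else 1) * z ^+ bb (sigma k0).
Proof.
have ind : (sigma k0 \in porbit sigma x0) = (k0 \in porbit sigma x0).
  by rewrite !mem_porbit_eq porbitS.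
rewrite /bb ind mul1r.
set X := (if k0 \in porbit sigma x0 then c else 0)%N.
have [e|ne] := eqVneq (jk sigma k0).+1 (Lk sigma k0).
  have := ik_eq e; rewrite /ik => ->.
  rewrite sigma_last // ik_porbit.
  rewrite {2}/beta jk_ik big_ord0 addn0 /dn -/(Lk sigma k0) -/(ik sigma k0).
  rewrite -e big_ord_recl /= -!exprD; congr (z ^+ _).
  rewrite /beta.
  have -> : (\sum_(i < jk sigma k0) a (sigma (iter (0 + i) sigma (ik sigma k0))) =
     \sum_(l < jk sigma k0) a (iter l.+1 sigma (ik sigma k0)))%N.
    by apply: eq_bigr => i _; rewrite add0n.
  lia.
have := ik_neq _ _ ne; rewrite /ik => ->; rewrite mul1r -!exprD; congr (z ^+ _).
rewrite /beta jkS // big_ord_recr /= ikS iter_jk; lia.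
Qed.

End Key.

Unset Implicit Arguments.

Lemma nt (N L B : nat) : prime N -> (0 < L < N)%N ->
  (N %| L * (L ^ (totient N).-1 * (N - B %% N)) + B)%N.
Proof.
move=> pN /andP[L0 LN].
have N0 : (0 < N)%N by apply: prime_gt0.
have cop : coprime L N.
  by rewrite coprime_sym prime_coprime //; apply/negP => /dvdn_leq => /(_ L0); rewrite leqNgt LN.
rewrite /dvdn mulnA -expnS prednK ?totient_gt0 //.
rewrite -modnDml -modnMml Euler_exp_totient // modnMml mul1n modnDml.
rewrite -modnDmr subnK ?modnn //.
by apply: ltnW; rewrite ltn_pmod.
Qed.

Lemma L0_lt (n : nat) (sigma : 'S_n.+1) : (2 <= #|porbits sigma|)%N ->
  (#|porbit sigma ord0| < n.+1)%N.
Proof.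
move=> h2; rewrite ltn_neqAle; apply/andP; split; last first.
  by apply: leq_trans (max_card _) _; rewrite card_ord.
apply/negP => /eqP e.
have T : porbit sigma ord0 = setT.
  apply/eqP; rewrite eqEcard subsetT cardsT card_ord /=; apply: (leq_trans _ (eq_leq (esym e))) => //. 
have : (#|porbits sigma| <= #|[set porbit sigma ord0]|)%N.
  apply: subset_leq_card; apply/subsetP => B /imsetP[x _ ->].
  by rewrite inE -mem_porbit_eq T inE.
by rewrite cards1 leqNgt h2.
Qed.

Theorem proposition5 (n : nat) (Hprime : prime n.+1) (S : {group 'S_n.+1})
    (sigma : 'S_n.+1) (g : 'M[algC]_n.+1) :
  sigma \in S -> SLf g -> (2 <= #|porbits sigma|)%N ->
  exists d : {set 'I_n.+1} -> int,
    conj_in (Ggrp S) (perm_mx sigma * g)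
      (\prod_(A in porbits sigma)
          (perm_mx (cycle_of sigma A) * tgen (first_idx A) ^ (d A))).
Proof.
move=> sS [Gg _] h2.
have [a ga] := @Gfd_Dm_inv n g Gg.
set L := #|porbit sigma ord0|.
set B := (\sum_k beta sigma a k)%N.
set c := (L ^ (totient n.+1).-1 * (n.+1 - B %% n.+1))%N.
set b := bb sigma a ord0 c.
have sumb : (\sum_k b k = L * c + B)%N.
  by rewrite /b /bb big_split /= -big_mkcond sum_nat_const.
have dv : (n.+1 %| \sum_k b k)%N.
  rewrite sumb; apply: nt => //.
  by rewrite lt0n card_porbit_neq0 L0_lt.
exists (fun A => Posz (dn sigma a A)).
exists (Dm n b); split.
  apply: gen_base; right; split; first exact: Gfd_Dm.
  rewrite det_Dm -(divnK dv) mulnC exprM (prim_expr_order (zprim n)) expr1n //.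
have := @prod_all n sigma (dn sigma a); rewrite /FF => ->.
suff hu : Mon sigma (fun k => if k == first_idx (porbit sigma k)
            then zeta n ^+ dn sigma a (porbit sigma k) else 1) * Dm n b =
          Dm n b * (perm_mx sigma * g).
  by rewrite -hu mulrK // Dm_unit.
rewrite ga perm_mxMon /Dm !MonM; apply: Mon_ext.
  by apply/permP => i; rewrite !permM !perm1.
move=> k; have := key sigma a ord0 c ((sigma^-1)%g k).
rewrite permKV.
have e1 : (sigma * 1)%g = sigma by apply/permP => i; rewrite permM perm1.
have e2 : ((1 : 'S_n.+1)^-1)%g k = k by rewrite invg1 perm1.
rewrite e1 e2 => ->; done.
Qed.
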